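(* Let $d\ge 1$, $n_1,\dots,n_d\ge 1$, $R\ge 1$, and let $\bm{U}_p\in\mathbb{R}^{n_p\times R}$ for $p=1,\dots,d$. Let $\mathcal{A}\in\mathbb{R}^{n_1\times\cdots\times n_d}$ be the CP tensor $$\mathcal{A}=\sum_{r=1}^R \bm{U}_1(:,r)\circ\bm{U}_2(:,r)\circ\cdots\circ\bm{U}_d(:,r),\quad\text{i.e.}\quad \mathcal{A}(i_1,\dots,i_d)=\sum_{r=1}^R\prod_{p=1}^d \bm{U}_p(i_p,r).$$ Let $1\le k\le \prod_{p=1}^d n_p$. Consider the optimization problem over matrices $\bm{X}_p\in\mathbb{R}^{n_p\times k}$, $p=1,\dots,d$: $$\max\ \sum_{j=1}^k\sum_{r=1}^R\prod_{p=1}^d\langle \bm{X}_p(:,j),\,\bm{U}_p(:,r)*\bm{X}_p(:,j)\rangle$$ subject to $\|\bm{X}_p(:,j)\|_2=1$ for all $p=1,\dots,d$ and $j=1,\dots,k$, and $$\prod_{p=1}^d\langle \bm{X}_p(:,i),\bm{X}_p(:,j)\rangle=\begin{cases}1,& i=j,\\ 0,& i\ne j,\end{cases}\qquad i,j=1,\dots,k.$$ Then retrieving the $k$ largest elements of $\mathcal{A}$ is equivalent to solving this problem: its maximum value equals the sum of the $k$ largest entries of $\mathcal{A}$ (counted with multiplicity over the $\prod_p n_p$ positions), and it is attained by choosing distinct multi-indices $(i^{(j)}_1,\dots,i^{(j)}_d)$, $j=1,\dots,k$, at which the $k$ largest entries of $\mathcal{A}$ occur and setting $\bm{X}_p(:,j)=\bm{e}_{i^{(j)}_p}$,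 the $i^{(j)}_p$-th standard basis vector of $\mathbb{R}^{n_p}$.
   Context: $\circ$ denotes the vector outer product, $*$ the entrywise (Hadamard) product of vectors, and $\langle\cdot,\cdot\rangle$ the Euclidean inner product; thus $\langle \bm{x},\bm{u}*\bm{x}\rangle=\sum_{l}\bm{u}(l)\bm{x}(l)^2$. $\bm{X}(:,j)$ denotes the $j$-th column of a matrix $\bm{X}$. The paper states the theorem informally as ''retrieving the $k$ largest elements of $\mathcal{A}$ is equivalent to solving the continuous constrained optimization problem''; the precise sense stated here (optimal value equals the sum of the $k$ largest entries, attained at standard basis vectors located at those entries) is the meaning of that equivalence. *)

(* Defs.v *)
From HB Require Import structures.
From mathcomp Require Import all_boot all_order all_algebra.
Set Implicit Arguments. Unset Strict Implicit. Unset Printing Implicit Defensive.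
Import Order.TTheory GRing.Theory Num.Theory.
Local Open Scope ring_scope.

Definition midx (d : nat) (n : 'I_d -> nat) := {dffun forall p : 'I_d, 'I_(n p)}.

Definition cpA (R : rcfType) (d : nat) (n : 'I_d -> nat) (Rk : nat)
  (U : forall p : 'I_d, 'M[R]_(n p, Rk)) (m : midx n) : R :=
  \sum_(r < Rk) \prod_(p < d) U p (m p) r.

Definition topk_sum (R : rcfType) (I : finType) (A : I -> R) (k : nat) : R :=
  \sum_(x <- take k (sort (fun a b : R => b <= a) [seq A i | i : I])) x.

Definition cp_obj (R : rcfType) (d : nat) (n : 'I_d -> nat) (Rk k : nat)
  (U : forall p : 'I_d, 'M[R]_(n p, Rk)) (X : forall p : 'I_d, 'M[R]_(n p, k)) : R :=
  \sum_(j < k) \sum_(r < Rk) \prod_(p < d)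
     \sum_(l < n p) X p l j * (U p l r * X p l j).

Definition cp_feasible (R : rcfType) (d : nat) (n : 'I_d -> nat) (k : nat)
  (X : forall p : 'I_d, 'M[R]_(n p, k)) : Prop :=
  (forall (p : 'I_d) (j : 'I_k), Num.sqrt (\sum_(l < n p) X p l j ^+ 2) = 1) /\
  (forall i j : 'I_k,
     \prod_(p < d) (\sum_(l < n p) X p l i * X p l j) = (i == j)%:R).

Definition topk_positions (R : rcfType) (I : finType) (k : nat)
  (A : I -> R) (idx : 'I_k -> I) : Prop :=
  injective idx /\
  (forall (j : 'I_k) (m : I), (forall j' : 'I_k, m != idx j') -> A m <= A (idx j)).

Definition basisX (R : rcfType) (d : nat) (n : 'I_d -> nat) (k : nat)
  (idx : 'I_k -> midx n) : forall p : 'I_d, 'M[R]_(n p, k) :=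
  fun p => \matrix_(l < n p, j < k) ((l == idx j p)%:R : R).

(* Main.v *)
Require Import Defs.
From HB Require Import structures.
From mathcomp Require Import all_boot all_order all_algebra.
Import Order.TTheory GRing.Theory Num.Theory.
Local Open Scope ring_scope.
From mathcomp Require Import ring lra.
Lemma prod_sum_midx (R : comNzRingType) (d : nat) (n : 'I_d -> nat)
  (F : forall p : 'I_d, 'I_(n p) -> R) :
  \prod_(p < d) \sum_(l < n p) F p l = \sum_(m : midx n) \prod_(p < d) F p (m p).
Proof.
pose T_ := fun p : 'I_d => 'I_(n p).
pose P_ := fun p : 'I_d => [ffun l : T_ p => F p l].
transitivity (\prod_(p < d) \sum_(l : T_ p) P_ p l).
  by apply: eq_bigr => p _; apply: eq_bigr => l _; rewrite ffunE.
rewrite (eq_bigr (fun p => \sum_(j in tagged_with T_ p) untag 0 (P_ p) j)); last first.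
  by move=> p _; exact: (big_tag (op := +%R) P_ p).
rewrite bigA_distr_big_dep.
rewrite -(big_fprod 1 +%R P_).
rewrite (reindex (@fprod_of_dffun _ T_)); last first.
  by exists (@dffun_of_fprod _ T_) => x _; rewrite ?fprod_of_dffunK ?dffun_of_fprodK.
by apply: eq_bigr => m _; apply: eq_bigr => p _; rewrite ffunE fprodE.
Qed.
Definition topset (R : realDomainType) (I : finType) (A : I -> R) (S : {set I}) :=
  forall x y, x \in S -> y \notin S -> A y <= A x.

Arguments topset {R I}.
Lemma cbound (R : realDomainType) (I : finType) (A : I -> R) (S : {set I}) (c : I -> R) :
  topset A S -> S != set0 ->
  (forall m, 0 <= c m) -> (forall m, c m <= 1) -> \sum_m c m = #|S|%:R ->
  \sum_m c m * A m <= \sum_(m in S) A m.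
Proof.
move=> top /set0Pn [x0 x0S] c0 c1 sc.
have [t tS ht] : exists2 t, t \in S & forall x, x \in S -> A t <= A x.
  have := @extremum_inP _ _ (<=%R) x0 (mem S) A (fun _ _ => lexx _)
     (fun y x z _ _ _ => @le_trans _ _ (A y) (A x) (A z)) (fun x y _ _ => le_total (A x) (A y)) x0S.
  by case => i iS h; exists i => // x xS; exact: h.
have e : forall F : I -> R, \sum_m (m \in S)%:R * F m = \sum_(m in S) F m.
  by move=> F; rewrite [RHS]big_mkcond; apply: eq_bigr => m _; case: (m \in S); rewrite ?mul1r ?mul0r.
have key: forall m, c m * A m - (m \in S)%:R * A m <= c m * A t - (m \in S)%:R * A t.
  move=> m; case: (boolP (m \in S)) => mS /=; rewrite ?mul1r ?mul0r.
    by have := ht m mS; have := c1 m; nra.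
  by have := top t m tS mS; have := c0 m; nra.
have : \sum_m (c m * A m - (m \in S)%:R * A m) <= \sum_m (c m * A t - (m \in S)%:R * A t) by apply: ler_sum => m _; exact: key.
rewrite /= !sumrB !e -mulr_suml sc sumr_const => h.
by rewrite -subr_le0; apply: (le_trans h); rewrite mulr_natl subrr.
Qed.

Lemma topset_eq (R : realDomainType) (I : finType) (A : I -> R) (S T : {set I}) :
  topset A S -> topset A T -> S != set0 -> #|S| = #|T| ->
  \sum_(m in S) A m = \sum_(m in T) A m.
Proof.
have e : forall (S : {set I}) (F : I -> R), \sum_m (m \in S)%:R * F m = \sum_(m in S) F m.
  by move=> S0 F; rewrite [RHS]big_mkcond; apply: eq_bigr => m _; case: (m \in S0); rewrite ?mul1r ?mul0r.
have s1 : forall S0 : {set I}, \sum_m ((m \in S0)%:R : R) = #|S0|%:R.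
  move=> S0; have := e S0 (fun _ => 1); rewrite sumr_const; under eq_bigr do rewrite mulr1; by [].

have c0 : forall (S0 : {set I}) m, 0 <= ((m \in S0)%:R : R) by move=> S0 m; case: (m \in S0).
have c1 : forall (S0 : {set I}) m, ((m \in S0)%:R : R) <= 1 by move=> S0 m; case: (m \in S0).
move=> tS tT S0 cST.
have T0 : T != set0 by rewrite -card_gt0 -cST card_gt0.
apply/eqP; rewrite eq_le; apply/andP; split.
  by rewrite -e; apply: cbound => //; rewrite s1 cST.
by rewrite -e; apply: cbound => //; rewrite s1 cST.
Qed.
Lemma topk_set (R : rcfType) (I : finType) (A : I -> R) k : (k <= #|I|)%N ->
  exists S : {set I}, [/\ #|S| = k, topset A S & topk_sum A k = \sum_(m in S) A m].
Proof.
move=> kI.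
set r := relpre A (fun a b : R => b <= a).
set L := sort r (enum I).
have uL : uniq L by rewrite sort_uniq enum_uniq.
have uT : uniq (take k L) by rewrite take_uniq.
have sL : size L = #|I| by rewrite size_sort cardE.
have rtot : total r by move=> x y; exact: le_total (A y) (A x).
have rtr : transitive r by move=> y x z h1 h2; exact: le_trans h2 h1.
exists [set m in take k L]; split.
- by rewrite cardsE (card_uniqP uT) size_takel // sL.
- move=> x y; rewrite !inE => xT yT.
  have yL : y \in L by rewrite mem_sort mem_enum.
  have yD : y \in drop k L by move: yL; rewrite -{1}(cat_take_drop k L) mem_cat (negbTE yT).
  have := sort_sorted rtot (enum I); rewrite -/L (sorted_pairwise rtr).
  rewrite -{1}(cat_take_drop k L) pairwise_cat => /and3P[/allrelP al _ _].
  exact: al.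
- rewrite /topk_sum sort_map -/r -/L -map_take big_map big_uniq //.
  by apply: eq_bigl => m; rewrite inE.
Qed.

Lemma sum_delta (R : comNzRingType) m (a : 'I_m) (F : 'I_m -> R) :
  \sum_(l < m) (l == a)%:R * F l = F a.
Proof.
rewrite (bigD1 a) //= eqxx mul1r big1 ?addr0 // => l /negbTE ->; by rewrite mul0r.
Qed.

Lemma card_midx d (n : 'I_d -> nat) : #|{: midx n}| = \prod_(p < d) n p.
Proof.
rewrite card_dep_ffun foldrE big_map big_enum /=.
by apply: eq_bigr => p _; rewrite card_ord.
Qed.

Theorem theorem1 (R : rcfType) (d : nat) (n : 'I_d -> nat) (Rk k : nat)
  (U : forall p : 'I_d, 'M[R]_(n p, Rk)) :
  (1 <= d)%N -> (forall p : 'I_d, (1 <= n p)%N) -> (1 <= Rk)%N ->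
  (1 <= k)%N -> (k <= \prod_(p < d) n p)%N ->
  (forall X : forall p : 'I_d, 'M[R]_(n p, k),
     cp_feasible X -> cp_obj U X <= topk_sum (cpA U) k) /\
  (exists idx : 'I_k -> midx n, topk_positions (cpA U) idx) /\
  (forall idx : 'I_k -> midx n, topk_positions (cpA U) idx ->
     cp_feasible (basisX R idx) /\ cp_obj U (basisX R idx) = topk_sum (cpA U) k).
Proof.
move=> d1 n1 R1 k1 kN.
set A := cpA U.
have kI : (k <= #|{: midx n}|)%N by rewrite card_midx.
have [S [cS tS eS]] := @topk_set _ _ A _ kI.
have S0 : S != set0 by rewrite -card_gt0 cS.
have Hidx : forall idx : 'I_k -> midx n, topk_positions A idx -> \sum_j A (idx j) = topk_sum A k.
  move=> idx; rewrite /topk_positions => -[inj top].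
  have cim : #|idx @: setT| = k by rewrite card_imset // cardsT card_ord.
  transitivity (\sum_(m in idx @: setT) A m).
    rewrite big_imset /=; last by move=> x y _ _; exact: inj.
    by apply: eq_bigl => j; rewrite inE.
  rewrite eS; apply: topset_eq => //.
  - move=> x y /imsetP [j _ ->] yI; apply: top => j'.
    by apply: contra yI => /eqP ->; apply/imsetP; exists j'.
  - by rewrite -card_gt0 cim.
  - by rewrite cim cS.
split.
  move=> X [hn ho].
  pose z := fun (j : 'I_k) (m : midx n) => \prod_(p < d) X p (m p) j.
  pose c := fun m => \sum_j z j m ^+ 2.
  have G : forall i j, \sum_m z i m * z j m = (i == j)%:R.
    move=> i j; rewrite -ho prod_sum_midx; apply: eq_bigr => m _.
    by rewrite /z -big_split.
  have obj : cp_obj U X = \sum_m c m * A m.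
    rewrite /cp_obj.
    transitivity (\sum_j \sum_(r < Rk) \sum_m z j m ^+ 2 * \prod_(p < d) U p (m p) r).
      apply: eq_bigr => j _; apply: eq_bigr => r _; rewrite prod_sum_midx.
      apply: eq_bigr => m _; rewrite /z -prodrXl -big_split; apply: eq_bigr => p _ /=.
      ring.
    under eq_bigr do rewrite exchange_big.
    rewrite exchange_big; apply: eq_bigr => m _.
    rewrite /c /A /cpA mulr_suml; apply: eq_bigr => j _; by rewrite mulr_sumr.
  have csum : \sum_m c m = k%:R.
    rewrite /c exchange_big /= (eq_bigr (fun _ => 1)) ?sumr_const ?card_ord //.
    move=> j _; transitivity ((j == j)%:R : R); last by rewrite eqxx.
    rewrite -G.
    by apply: eq_bigr => m _; rewrite expr2.
  have c0 : forall m, 0 <= c m by move=> m; apply: sumr_ge0 => j _; exact: sqr_ge0.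
  have c1 : forall m, c m <= 1.
    move=> m.
    pose v := fun m' => \sum_j z j m * z j m'.
    have vv : \sum_m' v m' ^+ 2 = c m.
      rewrite /v.
      under eq_bigr do rewrite expr2 mulr_suml.
      under eq_bigr do under eq_bigr do rewrite mulr_sumr.
      rewrite exchange_big /=.
      under eq_bigr do rewrite exchange_big.
      rewrite /c; apply: eq_bigr => i _ /=.
      transitivity (\sum_j z i m * z j m * (i == j)%:R).
        apply: eq_bigr => j _; rewrite -G mulr_sumr; apply: eq_bigr => m' _; ring.
      rewrite (bigD1 i) //= eqxx big1 ?addr0 => [|j ji]; first by rewrite mulr1 expr2.
      by rewrite eq_sym (negbTE ji) mulr0.
    have vm : v m = c m by rewrite /v /c; apply: eq_bigr => j _; rewrite expr2.
    have : v m ^+ 2 <= \sum_m' v m' ^+ 2.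
      rewrite (bigD1 m) //= lerDl; apply: sumr_ge0 => m' _; exact: sqr_ge0.
    rewrite vm vv => h; have := c0 m; nra.
  rewrite obj eS; apply: cbound => //; by rewrite csum cS.
split.
  pose idx := fun j : 'I_k => enum_val (cast_ord (esym cS) j).
  exists idx; split.
    by move=> i j /enum_val_inj /cast_ord_inj.
  move=> j m h; apply: tS; first exact: enum_valP.
  apply/negP => mS; have := h (cast_ord cS (enum_rank_in mS m)).
  by rewrite /idx cast_ordK enum_rankK_in // eqxx.
move=> idx hidx; split; last first.
  rewrite -(Hidx idx) // /cp_obj /basisX; apply: eq_bigr => j _.
  rewrite /A /cpA; apply: eq_bigr => r _; apply: eq_bigr => p _.
  under eq_bigr do rewrite !mxE.
  by rewrite sum_delta eqxx mulr1.
have [inj _] := hidx.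
split.
  move=> p j; rewrite /basisX.
  under eq_bigr do rewrite !mxE expr2.
  by rewrite sum_delta eqxx sqrtr1.
move=> i j; rewrite /basisX.
under eq_bigr do under eq_bigr do rewrite !mxE.
under eq_bigr do rewrite sum_delta.
case: (eqVneq i j) => [<-|ij].
  by rewrite big1 // => p _; rewrite eqxx.
have : idx i != idx j by apply: contra ij => /eqP /inj ->.
have : ~~ [forall p, idx i p == idx j p].
  apply: contra ij => /forallP h; apply/eqP/inj/ffunP => p; exact/eqP/h.
rewrite negb_forall => /existsP [p hp] _.
by rewrite (bigD1 p) //= (negbTE hp) mul0r.
Qed.
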